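(* Let $r\in\mathbb{Z}_{\ge0}$. Every character $\chi$ of $T$ of true depth $r$ is of the form $\chi=(\phi\circ\mathrm{det})\otimes\chi'$, where $\phi$ is a character of $E^1$ and $\chi'$ is a character of $T$ of minimal depth $r$.
   Context: Let $F$ be a non-archimedean local field with odd residual characteristic, ring of integers $\mathcal{O}_F$, maximal ideal $\mathfrak{p}_F$. Fix a non-square $\epsilon\in\mathcal{O}_F^\times$, $E=F[\sqrt\epsilon]$ with ring of integers $\mathcal{O}_E$, maximal ideal $\mathfrak{p}_E$; $\overline{x}$ is Galois conjugation; $E^1=\{x\in E^\times: x\overline x=1\}$. $G=\{g\in\mathrm{GL}_2(E):\overline{g}^{\top}\mathrm{w}g=\mathrm{w}\}$, $\mathrm{w}=\begin{pmatrix}0&1\\1&0\end{pmatrix}$; $\det(G)\subseteq E^1$. $T=\{t(a)=\mathrm{diag}(a,\overline a^{-1}):a\in E^\times\}$, $T_0=\{t(a):a\in\mathcal{O}_E^\times\}$, $T_n=\{t(a):a\in1+\mathfrak{p}_E^n\}$ ($n\ge1$); $S=\{\mathrm{diag}(a,a^{-1}):a\in F^\times\}$, $S_0$ ($a\in\mathcal{O}_F^\times$), $S_n$ ($a\in1+\mathfrak{p}_F^n$). A character $\chi$ of $T$ has depth $r\in\mathbb{Z}_{\ge0}$ if $\chi|_{T_r}\neq\mathbbm{1}$ and $\chi|_{T_{r+1}}=\mathbbm{1}$; a character trivial on $T_0$ is also said to have depth $0$. The true depth of $\chi$ is the depth of $\chi|_S$ (defined analogously with $S_n$). $\chi$ has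 minimal depth $r$ if its depth and true depth both equal $r$. *)

(* Defs.v *)
From HB Require Import structures.
From mathcomp Require Import all_boot all_order all_algebra.
From mathcomp Require Import reals.
From mathcomp.real_closed Require Import complex.
Set Implicit Arguments. Unset Strict Implicit. Unset Printing Implicit Defensive.
Import Order.TTheory GRing.Theory Num.Theory.
Local Open Scope ring_scope.

(* Setup.  E is a field, [sigma] a ring automorphism of E of order 2 (Galois *)
(* conjugation), F := the fixed field of sigma, and v : E -> int a discrete  *)
(* valuation on E (the value v 0 is junk and never used).                    *)

Section Setup.
Variables (E : fieldType) (sigma : {rmorphism E -> E}) (v : E -> int).

Definition inF (x : E) : Prop := sigma x = x.

(* x \in p_E^n  (n : int; n = 0 gives O_E) *)
Definition pid (n : int) (x : E) : bool := (x == 0) || (n <= v x).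

(* F is a non-archimedean local field with odd residual characteristic, E is
   the unramified quadratic extension F[sqrt eps] with eps in O_F^x a
   non-square, sigma is the Galois conjugation, and v is the normalized
   discrete valuation of E (whose restriction to F is the normalized
   valuation of F, since E/F is unramified). *)
Definition unram_quad_local_setup : Prop :=
  (forall x, sigma (sigma x) = x) /\
  (
      (forall x y, x != 0 -> y != 0 -> v (x * y) = v x + v y) /\
      (forall x y, x != 0 -> y != 0 -> x + y != 0 ->
         Order.min (v x) (v y) <= v (x + y)) /\
      (* discrete and normalized: F has a uniformizer of valuation 1 *)
      (exists varpi, inF varpi /\ varpi != 0 /\ v varpi = 1) /\
      (forall u : nat -> E, (forall i, inF (u i)) ->
         (forall n : nat, exists N : nat, forall i j, (N <= i)%N -> (N <= j)%N ->
             pid n%:Z (u i - u j)) ->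
         exists l, inF l /\ forall n : nat, exists N : nat, forall i, (N <= i)%N ->
             pid n%:Z (u i - l)) /\
      (* the residue field O_F / p_F is finite *)
      (exists s : seq E, (forall y, y \in s -> inF y /\ pid 0 y) /\
         forall x, inF x -> pid 0 x -> exists2 y, y \in s & pid 1 (x - y)) /\
      (* odd residual characteristic: 2 is a unit of O_F *)
      ((2%:R : E) != 0 /\ v 2%:R = 0) /\
      (exists eps sq : E,
         inF eps /\ eps != 0 /\ v eps = 0 /\
         ~ (exists c, inF c /\ c ^+ 2 = eps) /\
         sq ^+ 2 = eps /\ sigma sq = - sq /\
         (forall x, exists a b, inF a /\ inF b /\ x = a + b * sq))).

Definition tmat (a : E) : 'M[E]_2 :=
  \matrix_(i < 2, j < 2) (if i == j then (if i == 0 then a else (sigma a)^-1) else 0).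

(* membership of t(a) in T_n : n = 0 gives T_0 (a in O_E^x), n >= 1 gives
   a in 1 + p_E^n *)
Definition inTn (n : nat) (a : E) : Prop :=
  if n is 0 then a != 0 /\ v a = 0 else a != 0 /\ pid n%:Z (a - 1).

(* membership of diag(a, a^-1) in S_n (a in F); since E/F is unramified,
   F cap (1 + p_E^n) = 1 + p_F^n and F cap O_E^x = O_F^x *)
Definition inSn (n : nat) (a : E) : Prop := inF a /\ inTn n a.

Definition inE1 (x : E) : Prop := x * sigma x = 1.

Variable R : realType.

(* a (smooth) character of T, seen as a function on 2x2 matrices whose values
   on T matter: nonvanishing, multiplicative on T, trivial on some T_n *)
Definition is_char_T (chi : 'M[E]_2 -> R[i]) : Prop :=
  [/\ (forall a, a != 0 -> chi (tmat a) != 0),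
      (forall a b, a != 0 -> b != 0 -> chi (tmat a *m tmat b) = chi (tmat a) * chi (tmat b)) &
      (exists n : nat, forall a, inTn n.+1 a -> chi (tmat a) = 1)].

Definition is_char_E1 (phi : E -> R[i]) : Prop :=
  [/\ (forall x, inE1 x -> phi x != 0),
      (forall x y, inE1 x -> inE1 y -> phi (x * y) = phi x * phi y) &
      (exists n : nat, forall x, inE1 x -> pid n.+1%:Z (x - 1) -> phi x = 1)].

Definition trivT (chi : 'M[E]_2 -> R[i]) (n : nat) : Prop :=
  forall a, inTn n a -> chi (tmat a) = 1.

Definition trivS (chi : 'M[E]_2 -> R[i]) (n : nat) : Prop :=
  forall a, inSn n a -> chi (tmat a) = 1.

Definition has_depth (chi : 'M[E]_2 -> R[i]) (r : nat) : Prop :=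
  (~ trivT chi r /\ trivT chi r.+1) \/ (r = 0%N /\ trivT chi 0).

Definition has_true_depth (chi : 'M[E]_2 -> R[i]) (r : nat) : Prop :=
  (~ trivS chi r /\ trivS chi r.+1) \/ (r = 0%N /\ trivS chi 0).

Definition has_min_depth (chi : 'M[E]_2 -> R[i]) (r : nat) : Prop :=
  has_depth chi r /\ has_true_depth chi r.

End Setup.

(* Main.v *)
Require Import Defs.
From HB Require Import structures.
From mathcomp Require Import all_boot all_order all_algebra.
From mathcomp Require Import reals.
From mathcomp.real_closed Require Import complex.
From mathcomp Require Import boolp classical_sets.
From mathcomp Require Import zify ring.
Import Order.TTheory GRing.Theory Num.Theory.
Local Open Scope ring_scope.

Module ExtM.
Set Implicit Arguments. Unset Strict Implicit.
Local Open Scope classical_set_scope.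


Section Ext.
Variables (E : fieldType) (C : numClosedFieldType).

Definition homgraph (X : set (E * C)) : Prop :=
  [/\ (forall x c c', X (x,c) -> X (x,c') -> c = c'),
      (forall x c, X (x,c) -> x != 0 /\ c != 0),
      (forall x y a b, X (x,a) -> X (y,b) -> X (x*y, a*b)) &
      (forall x a, X (x,a) -> X (x^-1, a^-1))].

Lemma homgraph_pow (A : set (E * C)) x a : homgraph A -> A (1,1) -> A (x,a) ->
  forall k : int, A (x ^ k, a ^ k).
Proof.
case=> _ _ Hm Hi H1 Hx.
have Hn : forall n : nat, A (x ^+ n, a ^+ n).
  by elim=> [|n IH]; rewrite ?expr0 // !exprS; apply: Hm.
case=> n; first exact: Hn.
by rewrite !NegzE -!exprnN; apply: Hi.
Qed.

Lemma homgraph_z (A : set (E * C)) g : homgraph A -> A (1,1) -> g != 0 ->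
  exists z : C, z != 0 /\ forall m : int, (exists c, A (g ^ m, c)) -> A (g ^ m, z ^ m).
Proof.
move=> HA H1 g0; have [Hf Hnz Hm Hi] := HA.
case: (pselect (exists n : nat, (0 < n)%N /\ exists c, A (g ^+ n, c))) => [ex|nex].
  have ex' : exists n : nat, (0 < n)%N && `[< exists c, A (g ^+ n, c) >].
    by case: ex => n [n0 c]; exists n; rewrite n0; apply/asboolP.
  case: (ex_minnP ex') => n /andP[n0 /asboolP [w Aw]] nmin.
  have [_ w0] := Hnz _ _ Aw.
  exists (n.-root w); have rK := rootCK n0 w.
  split; first by apply: contraNneq w0 => z0; rewrite -rK z0 expr0n gtn_eqF.
  move=> m [c Ac].
  have Aq : forall q : int, A (g ^ (q * n), (n.-root w) ^ (q * n)).
    move=> q; rewrite mulrC -!exprz_exp -exprnP -exprnP rK.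
    exact: homgraph_pow.
  have E1 := divz_eq m n.
  have n0' : (n%:Z != 0) by rewrite eqz_nat -lt0n.
  have := modz_ge0 m n0'; have := @ltz_pmod m (n%:Z); rewrite ltz_nat => /(_ n0).
  case Er : (m %% n)%Z => [k|k] // kn _.
  suff k0 : k = 0%N by move: E1; rewrite Er k0 addr0 => ->; apply: Aq.
  apply/eqP; rewrite -leqn0 leqNgt; apply/negP => k0.
  have nk : ~~ (n <= k)%N by rewrite -ltnNge -ltz_nat.
  apply: (negP nk); apply: nmin; rewrite k0 /=; apply/asboolP.
  exists (c * ((n.-root w) ^ ((m %/ n)%Z * n))^-1).
  have := Hm _ _ _ _ Ac (Hi _ _ (Aq (m %/ n)%Z)).
  rewrite {1}E1 Er expfzDr // mulrAC mulfV ?expfz_neq0 // mul1r.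
  by rewrite -exprnP.
exists 1; split; first exact: oner_neq0.
move=> [k|k] [c Ac].
  case: k Ac => [|k] Ac; first by rewrite !expr0z.
  by exfalso; apply: nex; exists k.+1; split=> //; exists c.
exfalso; apply: nex; exists k.+1; split=> //; exists c^-1.
by move: (Hi _ _ Ac); rewrite NegzE -exprnN invrK.
Qed.

Lemma ext_step (A : set (E * C)) g : homgraph A -> A (1,1) -> g != 0 ->
  ~ (exists c, A (g,c)) ->
  exists A' : set (E * C), [/\ homgraph A', A `<=` A' & exists c, A' (g,c)].
Proof.
move=> HA H1 g0 ng; have [Hf Hnz Hm Hi] := HA.
have [z [z0 Hz]] := homgraph_z HA H1 g0.
exists (fun p => exists (m : int) a, A (p.1 * g ^ (- m), a) /\ p.2 = a * z ^ m).
split.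
- split.
  + move=> x c c' /= [m [a [Aa ->]]] [k [b [Ab ->]]].
    have [xm0 a0] := Hnz _ _ Aa; have [xk0 b0] := Hnz _ _ Ab.
    have x0 : x != 0 by apply: contraNneq xm0 => ->; rewrite mul0r.
    have e : (x * g ^ (- k))^-1 * (x * g ^ (- m)) = g ^ (k - m).
      by rewrite invfM invr_expz opprK mulrACA mulVf // mul1r -expfzDr.
    have A2 := Hm _ _ _ _ (Hi _ _ Ab) Aa; rewrite e in A2.
    have := Hf _ _ _ A2 (Hz _ (ex_intro _ _ A2)).
    move=> /(congr1 (fun t => b * t)); rewrite mulrA mulfV // mul1r => ->.
    by rewrite -mulrA -expfzDr // addrNK.
  + move=> x c /= [m [a [Aa ->]]]; have [xm0 a0] := Hnz _ _ Aa.
    split; first by apply: contraNneq xm0 => ->; rewrite mul0r.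
    by rewrite mulf_neq0 // expfz_neq0.
  + move=> x y a b /= [m [a' [Aa ->]]] [k [b' [Ab ->]]].
    exists (m + k); exists (a' * b'); split; last first.
      by rewrite expfzDr // mulrACA.
    have := Hm _ _ _ _ Aa Ab.
    by rewrite opprD expfzDr // mulrACA.
  + move=> x a /= [m [a' [Aa ->]]].
    exists (- m); exists a'^-1; split; last by rewrite invfM invr_expz.
    by have := Hi _ _ Aa; rewrite invfM invr_expz.
- move=> [x c] Ac; exists 0; exists c; split; first by rewrite /= oppr0 expr0z mulr1.
  by rewrite expr0z mulr1.
- exists z; exists 1; exists 1; split; last by rewrite mul1r expr1z.
  by rewrite /= exprN1 mulfV.
Qed.

Lemma hom_ext (B : set (E * C)) : homgraph B -> B (1,1) ->
  exists A : set (E * C),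
    [/\ homgraph A, B `<=` A & forall x, x != 0 -> exists c, A (x,c)].
Proof.
move=> HB B1.
pose P := fun X : set (E * C) => homgraph X /\ (X = set0 \/ B `<=` X).
have [|A [[HA AB] Amax]] := @Zorn_bigcup _ P.
  move=> F FP Ftot.
  have common : forall p q, (\bigcup_(X in F) X)%classic p ->
      (\bigcup_(X in F) X)%classic q ->
      exists X, [/\ F X, X p & X q].
    move=> p q [X FX Xp] [Y FY Yq].
    case: (Ftot _ _ FX FY) => [XY|YX].
      by exists Y; split=> //; apply: XY.
    by exists X; split=> //; apply: YX.
  split.
    split.
    - move=> x c c' Hc Hc'; have [X [FX Xc Xc']] := common _ _ Hc Hc'.
      by have [[Hf _ _ _] _] := FP _ FX; apply: Hf Xc Xc'.
    - move=> x c [X FX Xc].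
      by have [[_ Hnz _ _] _] := FP _ FX; apply: Hnz Xc.
    - move=> x y a b Ha Hb; have [X [FX Xa Xb]] := common _ _ Ha Hb.
      have [[_ _ Hm _] _] := FP _ FX; exists X => //; exact: Hm.
    - move=> x a [X FX Xa].
      have [[_ _ _ Hi] _] := FP _ FX; exists X => //; exact: Hi.
  case: (pselect (exists X, F X /\ B `<=` X)) => [[X [FX BX]]|nex].
    by right=> p Bp; exists X => //; apply: BX.
  left; apply/seteqP; split=> // p [X FX Xp].
  have [_ [X0|BX]] := FP _ FX; first by rewrite X0 in Xp.
  by exfalso; apply: nex; exists X.
have AB' : B `<=` A.
  case: AB => // A0; exfalso; apply: (Amax B); last by split=> //; right.
  rewrite A0; split=> //; move=> /(_ (1,1) B1) //.
exists A; split=> // g g0; apply: contrapT => ng.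
have [A' [HA' AA' [c A'c]]] := ext_step HA (AB' _ B1) g0 ng.
apply: (Amax A'); last by split=> //; right=> p Bp; apply/AA'/AB'.
split=> // A'A; apply: ng; exists c; exact: A'A.
Qed.
End Ext.

End ExtM.
Import ExtM.

Module AuxM.
Set Implicit Arguments. Unset Strict Implicit.

Section Val.
Variables (E : fieldType) (v : E -> int).
Hypothesis vM : forall x y, x != 0 -> y != 0 -> v (x * y) = v x + v y.
Hypothesis vU : forall x y, x != 0 -> y != 0 -> x + y != 0 ->
         Order.min (v x) (v y) <= v (x + y).

Lemma v1 : v 1 = 0.
Proof.
have := vM (oner_neq0 E) (oner_neq0 E); rewrite mulr1.
by move=> /(congr1 (fun t => t - v 1)); rewrite addrK subrr.
Qed.

Lemma vN1 : v (-1) = 0.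
Proof.
have n1 : (-1 : E) != 0 by rewrite oppr_eq0 oner_neq0.
have := vM n1 n1; rewrite mulrNN mulr1 v1; lia.
Qed.

Lemma vN x : x != 0 -> v (- x) = v x.
Proof.
move=> x0; have n1 : (-1 : E) != 0 by rewrite oppr_eq0 oner_neq0.
by rewrite -mulN1r vM // vN1 add0r.
Qed.

Lemma vV x : x != 0 -> v x^-1 = - v x.
Proof.
move=> x0; have := vM x0 (invr_neq0 x0); rewrite mulfV // v1; lia.
Qed.

Lemma pidN n x : pid v n (- x) = pid v n x.
Proof.
rewrite /pid oppr_eq0; case: eqP => //= /eqP x0; by rewrite vN.
Qed.

Lemma pidD n x y : pid v n x -> pid v n y -> pid v n (x + y).
Proof.
rewrite /pid; case: (eqVneq x 0) => [->|x0]; first by rewrite add0r => _.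
case: (eqVneq y 0) => [->|y0]; first by rewrite addr0 => h _; rewrite (negbTE x0) in h *.
case: (eqVneq (x + y) 0) => //= s0 hx hy.
apply: le_trans (vU x0 y0 s0); by rewrite le_min hx hy.
Qed.

Lemma pidB n x y : pid v n x -> pid v n y -> pid v n (x - y).
Proof. by move=> hx hy; apply: pidD => //; rewrite pidN. Qed.

Lemma pidM n m x y : pid v n x -> pid v m y -> pid v (n + m) (x * y).
Proof.
rewrite /pid; case: (eqVneq x 0) => [->|x0]; first by rewrite mul0r eqxx.
case: (eqVneq y 0) => [->|y0]; first by rewrite mulr0 eqxx.
rewrite mulf_eq0 (negbTE x0) (negbTE y0) /= vM // => hx hy; exact: lerD.
Qed.

Lemma pid_mono n m x : n <= m -> pid v m x -> pid v n x.
Proof. rewrite /pid => nm /orP[->//|h]; apply/orP; right; exact: le_trans h. Qed.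

Lemma pid1 : pid v 0 1.
Proof. by rewrite /pid v1 lexx orbT. Qed.

Lemma pidU_v0 (n : int) x : 1 <= n -> x != 0 -> pid v n (x - 1) -> v x = 0.
Proof.
move=> n1 x0 hx.
have hx0 : pid v 0 x.
  by rewrite -(subrK 1 x); apply: pidD; [apply: pid_mono hx; lia|exact: pid1].
have : ~~ pid v 1 x.
  apply/negP => h1; have := pidB h1 (pid_mono n1 hx).
  by rewrite opprB addrC subrK /pid oner_eq0 v1.
move: hx0; rewrite /pid (negbTE x0) /=; lia.
Qed.

End Val.

Section Tm.
Variables (E : fieldType) (sigma : {rmorphism E -> E}).

Lemma tmat_mul a b : tmat sigma a *m tmat sigma b = tmat sigma (a * b).
Proof.
apply/matrixP=> i j; rewrite !mxE !big_ord_recl big_ord0 !mxE.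
case: i => [[|[|//]] ?]; case: j => [[|[|//]] ?] /=;
  rewrite ?mulr0 ?mul0r ?addr0 ?add0r //.
by rewrite rmorphM invfM.
Qed.

Lemma tmat00 a : tmat sigma a 0 0 = a.
Proof. by rewrite mxE. Qed.

Lemma tmat_det a : \det (tmat sigma a) = a * (sigma a)^-1.
Proof.
have -> : tmat sigma a = diag_mx (\row_(j < 2) (if j == 0 then a else (sigma a)^-1)).
  apply/matrixP=> i j; rewrite !mxE.
by case: (i == j).
rewrite det_diag !big_ord_recl big_ord0 !mxE.
by rewrite mulr1.
Qed.
End Tm.

Section Main.
Variables (E : fieldType) (sigma : {rmorphism E -> E}) (v : E -> int)
  (R : realType) (chi : 'M[E]_2 -> R[i]) (r : nat).
Hypothesis vM : forall x y, x != 0 -> y != 0 -> v (x * y) = v x + v y.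
Hypothesis vU : forall x y, x != 0 -> y != 0 -> x + y != 0 ->
         Order.min (v x) (v y) <= v (x + y).
Hypothesis chi_nz : forall a, a != 0 -> chi (tmat sigma a) != 0.
Hypothesis chi_mul : forall a b, a != 0 -> b != 0 ->
  chi (tmat sigma a *m tmat sigma b) = chi (tmat sigma a) * chi (tmat sigma b).
Hypothesis Htriv : trivS sigma v chi r.+1.

Local Notation chiT a := (chi (tmat sigma a)).

Lemma chiT_mul a b : a != 0 -> b != 0 -> chiT (a * b) = chiT a * chiT b.
Proof. by move=> a0 b0; rewrite -tmat_mul chi_mul. Qed.

Lemma chiT1 : chiT 1 = 1.
Proof.
have h := chiT_mul (oner_neq0 E) (oner_neq0 E); rewrite mulr1 in h.
by apply: (mulfI (chi_nz (oner_neq0 E))); rewrite mulr1 -h.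
Qed.

Lemma chiTV a : a != 0 -> chiT a^-1 = (chiT a)^-1.
Proof.
move=> a0; have h := chiT_mul a0 (invr_neq0 a0); rewrite mulfV // chiT1 in h.
by apply: (mulfI (chi_nz a0)); rewrite -h mulfV // chi_nz.
Qed.

Lemma inFM x y : inF sigma x -> inF sigma y -> inF sigma (x * y).
Proof. by rewrite /inF rmorphM => -> ->. Qed.
Lemma inFV x : inF sigma x -> inF sigma x^-1.
Proof. by rewrite /inF fmorphV => ->. Qed.
Lemma inF1 : inF sigma 1.
Proof. by rewrite /inF rmorph1. Qed.

Definition Uu (x : E) := x != 0 /\ pid v r.+1%:Z (x - 1).

Lemma U_pid0 x : Uu x -> pid v 0 x.
Proof.
case=> x0 hx; rewrite -(subrK 1 x); apply: (pidD vU) => //; last exact: pid1.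
by apply: pid_mono hx.
Qed.

Lemma U_mul x y : Uu x -> Uu y -> Uu (x * y).
Proof.
move=> [x0 hx] [y0 hy]; split; first by rewrite mulf_neq0.
have -> : x * y - 1 = (x - 1) * y + (y - 1) by rewrite mulrBl mul1r addrA subrK.
apply: (pidD vU) => //.
by have := pidM vM hx (U_pid0 (conj y0 hy)); rewrite addr0.
Qed.

Lemma U_inv x : Uu x -> Uu x^-1.
Proof.
move=> [x0 hx]; split; first by rewrite invr_neq0.
have -> : x^-1 - 1 = - ((x - 1) * x^-1) by rewrite mulrBl mulfV // mul1r opprB.
rewrite (pidN vM).
have h0 : pid v 0 x^-1.
  rewrite /pid invr_eq0 (negbTE x0) /= vV //.
  by rewrite (pidU_v0 vM vU (n := r.+1%:Z)) ?oppr0 ?lez_nat.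
by have := pidM vM hx h0; rewrite addr0.
Qed.

Lemma U1 : Uu 1.
Proof. by split; [exact: oner_neq0|rewrite subrr /pid eqxx]. Qed.

Definition Bg (p : E * R[i]) := exists f u,
  [/\ inF sigma f, f != 0, Uu u, p.1 = f * u & p.2 = chiT f].

Lemma Bg_wd f u f' u' : inF sigma f -> f != 0 -> Uu u -> inF sigma f' -> f' != 0 ->
  Uu u' -> f * u = f' * u' -> chiT f = chiT f'.
Proof.
move=> Ff f0 Uu_ Ff' f'0 Uu' e.
have u0 : u != 0 by case: Uu_.
have eq : f'^-1 * f = u' * u^-1.
  apply: (mulfI f'0); rewrite mulrA mulfV // mul1r; apply: (mulIf u0).
  by rewrite -mulrA mulfVK.
have q0 : f'^-1 * f != 0 by rewrite mulf_neq0 ?invr_neq0.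
have hq : chiT (f'^-1 * f) = 1.
  apply: Htriv; split; first by apply: inFM => //; apply: inFV.
  by rewrite eq; have [] := U_mul Uu' (U_inv Uu_).
have -> : f = f' * (f'^-1 * f) by rewrite mulrA mulfV // mul1r.
by rewrite chiT_mul ?invr_neq0 // hq mulr1.
Qed.

Lemma Bg_hom : homgraph Bg.
Proof.
split.
- move=> x c c' [f [u [Ff f0 Uu_ /= ex ->]]] [f' [u' [Ff' f'0 Uu' /= ex' ->]]].
  by apply: (@Bg_wd f u f' u') => //; rewrite -ex -ex'.
- move=> x c [f [u [Ff f0 [u0 _] /= -> ->]]]; split; first by rewrite mulf_neq0.
  exact: chi_nz.
- move=> x y a b [f [u [Ff f0 Uu_ /= -> ->]]] [f' [u' [Ff' f'0 Uu' /= -> ->]]].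
  exists (f * f'); exists (u * u'); split => //=.
  + exact: inFM.
  + by rewrite mulf_neq0.
  + exact: U_mul.
  + by rewrite mulrACA.
  + by rewrite chiT_mul.
- move=> x a [f [u [Ff f0 Uu_ /= -> ->]]].
  exists f^-1; exists u^-1; split => //=.
  + exact: inFV.
  + by rewrite invr_neq0.
  + exact: U_inv.
  + by rewrite invfM.
  + by rewrite chiTV.
Qed.

Lemma Bg1 : Bg (1,1).
Proof.
exists 1; exists 1; split => //=; [exact: inF1|exact: oner_neq0|exact: U1|
  by rewrite mulr1|by rewrite chiT1].
Qed.

Lemma exists_psi : exists psi : E -> R[i],
  [/\ (forall x, x != 0 -> psi x != 0),
      (forall x y, x != 0 -> y != 0 -> psi (x * y) = psi x * psi y),
      (forall f, inF sigma f -> f != 0 -> psi f = chiT f) &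
      (forall u, Uu u -> psi u = 1)].
Proof.
have [A [HA BA Atot]] := hom_ext Bg_hom Bg1.
have ex : forall x, exists c, x != 0 -> A (x, c).
  move=> x; case: (eqVneq x 0) => [->|x0]; first by exists 0 => /eqP.
  by have [c hc] := Atot x x0; exists c.
have [psi Hpsi] := choice ex.
have [Hf Hnz Hm Hi] := HA.
exists psi; split.
- by move=> x x0; have [] := Hnz _ _ (Hpsi x x0).
- move=> x y x0 y0; apply: Hf (Hpsi _ (mulf_neq0 x0 y0)) _.
  exact: Hm (Hpsi x x0) (Hpsi y y0).
- move=> f Ff f0; apply: Hf (Hpsi f f0) _; apply: BA.
  exists f; exists 1; split => //=; [exact: U1|by rewrite mulr1].
- move=> u Uu_; have u0 : u != 0 by case: Uu_.
  rewrite -chiT1; apply: Hf (Hpsi u u0) _; apply: BA.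
  exists 1; exists u; split => //=; [exact: inF1|exact: oner_neq0|by rewrite mul1r].
Qed.

End Main.

End AuxM.
Import AuxM.

Theorem theorem3p3 (E : fieldType) (sigma : {rmorphism E -> E}) (v : E -> int)
    (R : realType)
    (Hsetup : unram_quad_local_setup sigma v)
    (r : nat) (chi : 'M[E]_2 -> R[i])
    (Hchi : is_char_T sigma v chi)
    (Htd : has_true_depth sigma v chi r) :
  exists (phi : E -> R[i]) (chi' : 'M[E]_2 -> R[i]),
    [/\ is_char_E1 sigma v phi,
        is_char_T sigma v chi',
        has_min_depth sigma v chi' r &
        forall a : E, a != 0 ->
          chi (tmat sigma a) = phi (\det (tmat sigma a)) * chi' (tmat sigma a)].
Proof.
case: Hsetup => Hinv [vM [vU [_ [_ [_ [[two0 v2] [eps [sq [_ [eps0 [_ [_ [sq2 [ssq _]]]]]]]]]]]]]].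
case: Hchi => chi_nz chi_mul [m Hm].
have sq0 : sq != 0 by apply: contraNneq eps0 => s0; rewrite -sq2 s0 expr0n.
have Htriv : trivS sigma v chi r.+1.
  case: Htd => [[_ h]|[r0 h]] //; rewrite r0 => a [Fa [a0 pa]].
  apply: h; split=> //; split=> //; exact: (pidU_v0 vM vU (n := 1)).
have [psi [psi0 psiM psiF psiU]] := exists_psi vM vU chi_nz chi_mul Htriv.
pose rho a := chi (tmat sigma a) / psi a.
have rhoM : forall a b, a != 0 -> b != 0 -> rho (a * b) = rho a * rho b.
  move=> a b a0 b0; rewrite /rho psiM // chiT_mul // invfM mulrACA //.
have rhoF : forall f, inF sigma f -> f != 0 -> rho f = 1.
  by move=> f Ff f0; rewrite /rho psiF // mulfV // chi_nz.
have sig0 : forall a, a != 0 -> sigma a != 0 by move=> a; rewrite fmorph_eq0.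
have R1 : forall a b, a != 0 -> b != 0 -> a / sigma a = b / sigma b -> rho a = rho b.
  move=> a b a0 b0 e.
  have Fq : inF sigma (a / b).
    rewrite /inF rmorphM fmorphV; apply/eqP; rewrite eqr_div ?sig0 //.
    by move/eqP: e; rewrite eqr_div ?sig0 // => /eqP ->; rewrite mulrC.
  have -> : a = (a / b) * b by rewrite divfK.
  by rewrite rhoM ?mulf_neq0 ?invr_neq0 // rhoF ?mulf_neq0 ?invr_neq0 // mul1r.
pose lift x := if x == -1 then sq else 1 + x.
have L1 : forall x, inE1 sigma x -> lift x != 0 /\ lift x / sigma (lift x) = x.
  move=> x ex; have x0 : x != 0.
    by apply/eqP => x0; move: ex; rewrite /inE1 x0 mul0r => /eqP; rewrite eq_sym oner_eq0.
  have sx : sigma x = x^-1 by apply: (mulfI x0); rewrite ex mulfV.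
  rewrite /lift; case: (eqVneq x (-1)) => [->|xn1].
    by split=> //; rewrite ssq invrN mulrN mulfV.
  have x1 : 1 + x != 0 by rewrite addrC addr_eq0.
  split=> //; rewrite rmorphD rmorph1 sx; field; by rewrite x0 addrC x1.
pose phi x := rho (lift x).
pose chi' := fun M : 'M[E]_2 => psi (M 0 0).
have chi'E : forall a, chi' (tmat sigma a) = psi a by move=> a; rewrite /chi' tmat00.
have rhoL : forall a, a != 0 -> phi (a / sigma a) = rho a.
  move=> a a0; have e1 : inE1 sigma (a / sigma a).
    rewrite /inE1 rmorphM fmorphV Hinv; field; by rewrite a0 sig0.
  by have [l0 le] := L1 _ e1; apply: R1 l0 a0 le.
exists phi, chi'; split.
- split.
  + move=> x ex; have [l0 _] := L1 _ ex.
    by rewrite /phi /rho mulf_neq0 ?invr_neq0 ?chi_nz ?psi0.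
  + move=> x y ex ey.
    have exy : inE1 sigma (x * y) by rewrite /inE1 rmorphM mulrACA ex ey mulr1.
    have [l0 le] := L1 _ ex; have [k0 ke] := L1 _ ey; have [m0 me] := L1 _ exy.
    rewrite /phi -rhoM //; apply: R1 => //; first by rewrite mulf_neq0.
    by rewrite me rmorphM invfM mulrACA le ke.
  + exists (maxn m r) => x ex px.
    have xn1 : x != -1.
      apply/eqP => e; move: px; rewrite e /pid.
      have -> : (-1 - 1 : E) = - 2%:R by rewrite -opprD.
      by rewrite oppr_eq0 (negbTE two0) vN // v2.
    rewrite /phi /lift (negbTE xn1).
    have x1 : 1 + x != 0 by rewrite addrC addr_eq0.
    set w := (1 + x) / 2%:R.
    have w0 : w != 0 by rewrite mulf_neq0 ?invr_neq0.
    have -> : 1 + x = 2%:R * w by rewrite /w mulrC divfK.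
    rewrite rhoM // rhoF //; last by rewrite /inF rmorph_nat.
    have pw : pid v (maxn m r).+1 (w - 1).
      have -> : w - 1 = (x - 1) * 2%:R^-1 by rewrite /w; field.
      have h2 : pid v 0 (2%:R^-1) by rewrite /pid invr_eq0 (negbTE two0) /= vV // v2.
      by have := pidM vM px h2; rewrite addr0.
    rewrite /rho Hm ?psiU ?invr1 ?mulr1 //; split=> //; apply: pid_mono pw;
      by rewrite lez_nat ltnS ?leq_maxl ?leq_maxr.
- split.
  + by move=> a a0; rewrite chi'E psi0.
  + by move=> a b a0 b0; rewrite /chi' tmat_mul !tmat00 psiM.
  + by exists r => a [a0 pa]; rewrite chi'E psiU.
- have trT : trivT sigma v chi' r.+1 by move=> a [a0 pa]; rewrite chi'E psiU.
  have eqS : forall n, trivS sigma v chi' n <-> trivS sigma v chi n.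
    move=> n; have key : forall a, inSn sigma v n a -> chi' (tmat sigma a) = chi (tmat sigma a).
      move=> a [Fa ha]; have a0 : a != 0 by case: n ha => [|n] [].
      by rewrite chi'E psiF.
    by split=> h a ha; [rewrite -key // | rewrite key //]; apply: h.
  split.
  + case: Htd => [[nS _]|[r0 _]].
      left; split=> // hT; apply: nS; apply/eqS => a [Fa ha]; exact: hT.
    case: (pselect (trivT sigma v chi' 0)) => h; first by right.
    by rewrite r0 in trT *; left; split.
  + case: Htd => [[nS tS]|[r0 tS]].
      by left; split; [move/eqS|apply/eqS].
    by right; split=> //; apply/eqS.
- by move=> a a0; rewrite tmat_det rhoL // chi'E /rho mulfVK // psi0.
Qed.
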